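(* Let $\mathcal V$ be a finite vocabulary and $C\ge 2$ an integer. For each $i\in\{1,\dots,C\}$ let $w_i:\mathcal V\to\mathbb R$ be arbitrary maps such that there exist a token $\tau\in\mathcal V$ and an index $i\in\{2,\dots,C\}$ with $w_i(\tau)\neq 0$, and let $b\in\mathbb R$. Then there is no parametrization of a single-layer transformer $F$ (with $L=1$, any number $H\ge 1$ of heads, either encoder-only or decoder-only) such that for every sequence $\mathbf t=[t_1,\dots,t_{|\mathbf t|}]$ over $\mathcal V$ with $1\le|\mathbf t|\le C$, $$F(\mathbf t)=b+\sum_{i=1}^{|\mathbf t|} w_i(t_i).$$
   Context: Let $\mathcal V$ be a finite vocabulary and $C\ge 2$ the context length; inputs are sequences $\mathbf t=[t_1,\dots,t_{|\mathbf t|}]$ with $t_i\in\mathcal V$ and $1\le|\mathbf t|\le C$. An $L$-layer transformer (without positional embeddings) with embedding dimension $d$, head dimension $d_h$ and $H\ge 1$ heads per layer is specified by: an embedding map $e:\mathcal V\to\mathbb R^d$; for each layer $l\in\{1,\dots,L\}$ and head $h\in\{1,\dots,H\}$, matrices $W_Q^{(l,h)},W_K^{(l,h)},W_V^{(l,h)}\in\mathbb R^{d\times d_h}$, vectors $b_Q^{(l,h)},b_K^{(l,h)},b_V^{(l,h)}\in\mathbb R^{d_h}$ and a linear map $P_{l,h}:\mathbb R^{d_h}\to\mathbb R^d$; for each layer an arbitrary function $\mathrm{ffn}_l:\mathbb R^d\to\mathbb R^d$; and an arbitrary classification head $\mathrm{cls}:\mathbb R^d\to\mathbb R^2$. A parametrization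 is any choice of all these objects. On input $\mathbf t$, set $h_i^{(0)}=e(t_i)$. In layer $l$, for each head $h$ compute $q_i=(W_Q^{(l,h)})^\top h_i^{(l-1)}+b_Q^{(l,h)}$, $k_i=(W_K^{(l,h)})^\top h_i^{(l-1)}+b_K^{(l,h)}$, $v_i=(W_V^{(l,h)})^\top h_i^{(l-1)}+b_V^{(l,h)}$; attention weights $a_{ij}=\exp(q_i^\top k_j/\sqrt{d_h})/\sum_{j'\in J_i}\exp(q_i^\top k_{j'}/\sqrt{d_h})$ for $j\in J_i$ and $a_{ij}=0$ for $j\notin J_i$, where $J_i=\{1,\dots,|\mathbf t|\}$ for an encoder-only model and $J_i=\{1,\dots,i\}$ for a decoder-only model (causal mask); head output $s_i^{(h)}=\sum_{j} a_{ij}v_j$. Then $h_i^{(l)}=\mathrm{ffn}_l\big(h_i^{(l-1)}+\sum_{h=1}^H P_{l,h}(s_i^{(h)})\big)$. The output (log odds) is $F(\mathbf t)=\Delta(\mathrm{cls}(h_r^{(L)}))$, where $\Delta(\ell)=\ell_1-\ell_0$ for $\ell=(\ell_0,\ell_1)\in\mathbb R^2$, and $r=1$ for encoder-only models, $r=|\mathbf t|$ for decoder-only models. *)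

(* Defs.v *)
From HB Require Import structures.
From mathcomp Require Import all_boot all_order all_algebra.
From mathcomp Require Import all_classical all_reals.
From mathcomp Require Import topology normedtype sequences exp.
Set Implicit Arguments. Unset Strict Implicit. Unset Printing Implicit Defensive.
Import Order.TTheory GRing.Theory Num.Theory.
Local Open Scope ring_scope.

(* Row-vector convention: a hidden state is a row vector h : 'rV_d, and
   (W^T h + b) in column notation becomes (h *m W + b) in row notation. *)

Record layer_params (R : realType) (d dh H : nat) := LayerParams {
  WQ : 'I_H -> 'M[R]_(d, dh);
  WK : 'I_H -> 'M[R]_(d, dh);
  WV : 'I_H -> 'M[R]_(d, dh);
  bQ : 'I_H -> 'rV[R]_dh;
  bK : 'I_H -> 'rV[R]_dh;
  bV : 'I_H -> 'rV[R]_dh;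
  Pmap : 'I_H -> 'M[R]_(dh, d);
  ffn : 'rV[R]_d -> 'rV[R]_d
}.

(* A parametrization of an L-layer transformer (no positional embeddings). *)
Record transformer (R : realType) (V : finType) (d dh H L : nat) := Transformer {
  emb : V -> 'rV[R]_d;
  layers : 'I_L -> layer_params R d dh H;
  cls : 'rV[R]_d -> R * R
}.

Definition dotv (R : realType) (n : nat) (u v : 'rV[R]_n) : R :=
  \sum_(k < n) u 0 k * v 0 k.

(* Attended positions J_i (0-based): all positions for an encoder,
   positions j <= i for a decoder (causal mask). *)
Definition Jset (decoder : bool) (n i : nat) : seq nat :=
  [seq j <- iota 0 n | if decoder then (j <= i)%N else true].

Definition head_out (R : realType) (d dh H : nat) (decoder : bool)
    (lp : layer_params R d dh H) (h : 'I_H) (hs : seq 'rV[R]_d) (i : nat)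
    : 'rV[R]_dh :=
  let n := size hs in
  let q := nth 0 hs i *m WQ lp h + bQ lp h in
  let k j := nth 0 hs j *m WK lp h + bK lp h in
  let v j := nth 0 hs j *m WV lp h + bV lp h in
  let score j := expR (dotv q (k j) / Num.sqrt (dh%:R)) in
  let Z := \sum_(j' <- Jset decoder n i) score j' in
  \sum_(j <- Jset decoder n i) ((score j / Z) *: v j).

Definition apply_layer (R : realType) (d dh H : nat) (decoder : bool)
    (lp : layer_params R d dh H) (hs : seq 'rV[R]_d) : seq 'rV[R]_d :=
  [seq ffn lp (nth 0 hs i + \sum_(h < H) (head_out decoder lp h hs i *m Pmap lp h))
  | i <- iota 0 (size hs)].

Definition Delta (R : realType) (l : R * R) : R := l.2 - l.1.

(* F(t) = Delta(cls(h_r^{(L)})), r = 1 (encoder) or r = |t| (decoder);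
   in 0-based indexing r-1 = 0 or size t - 1. *)
Definition tf_output (R : realType) (V : finType) (d dh H L : nat)
    (decoder : bool) (p : transformer R V d dh H L) (t : seq V) : R :=
  let h0 := [seq emb p x | x <- t] in
  let hL := foldl (fun hs l => apply_layer decoder (layers p l) hs) h0 (enum 'I_L) in
  let r := if decoder then (size t).-1 else 0%N in
  Delta (cls p (nth 0 hL r)).

(* Main.v *)
Require Import Defs.
From HB Require Import structures.
From mathcomp Require Import all_boot all_order all_algebra.
From mathcomp Require Import all_classical all_reals.
From mathcomp Require Import topology normedtype sequences exp.
Import Order.TTheory GRing.Theory Num.Theory.
Local Open Scope ring_scope.

Lemma Jset_lt (dec : bool) n i j : j \in Jset dec n i -> (j < n)%N.
Proof. by rewrite /Jset mem_filter mem_iota add0n => /andP[_ /andP[]]. Qed.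

Lemma Jset_0 (dec : bool) n i : (0 < n)%N -> 0%N \in Jset dec n i.
Proof. by move=> n0; rewrite /Jset mem_filter mem_iota n0; case: dec. Qed.

Lemma iterD_nat (Z : zmodType) k (y : Z) : iter k (+%R y) 0 = y *+ k.
Proof. by elim: k => [|k IH] //=; rewrite IH mulrS. Qed.

Lemma avg_const (R : realType) m (J : seq nat) (f : nat -> R)
  (v : nat -> 'rV[R]_m) c x : (0 < size J)%N -> 0 < c ->
  (forall j, j \in J -> f j = c /\ v j = x) ->
  \sum_(j <- J) (f j / \sum_(j' <- J) f j') *: v j = x.
Proof.
move=> sz cp Hj.
have -> : \sum_(j' <- J) f j' = (size J)%:R * c.
  rewrite (eq_big_seq (fun _ => c)); last by move=> j /Hj[].
  by rewrite big_const_seq count_predT iterD_nat mulr_natl.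
rewrite (eq_big_seq (fun _ => (c / ((size J)%:R * c)) *: x)); last first.
  by move=> j /Hj[-> ->].
rewrite big_const_seq count_predT.
rewrite iterD_nat.
rewrite scalerMnl -mulr_natl mulrA (mulrC (size J)%:R) -mulrA.
rewrite mulrA divff ?scale1r //.
by rewrite mulf_neq0 // ?gt_eqF // ltr0n.
Qed.

Lemma head_out_const (R : realType) d dh H (dec : bool)
  (lp : layer_params R d dh H) h (e : 'rV[R]_d) n i : (i < n)%N ->
  head_out dec lp h (nseq n e) i = e *m WV lp h + bV lp h.
Proof.
move=> lt_in; rewrite /head_out size_nseq nth_nseq lt_in.
have Hs : forall j, j \in Jset dec n i -> nth 0 (nseq n e) j = e.
  by move=> j /Jset_lt jn; rewrite nth_nseq jn.
apply: (@avg_const _ _ _ _ _ (expR (dotv (e *m WQ lp h + bQ lp h) (e *m WK lp h + bK lp h) / Num.sqrt dh%:R))).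
- by case: (Jset dec n i) (Jset_0 dec n i (leq_ltn_trans (leq0n i) lt_in)).
- exact: expR_gt0.
- by move=> j /Hs ->; split.
Qed.

Lemma map_constn (T U : Type) (c : U) (s : seq T) :
  [seq c | _ <- s] = nseq (size s) c.
Proof. by elim: s => //= x s ->. Qed.

Lemma enum_I1 : enum 'I_1 = [:: ord0].
Proof. by apply: (inj_map val_inj); rewrite val_enum_ord. Qed.

Lemma tf_const (R : realType) (V : finType) d dh H (dec : bool)
  (p : transformer R V d dh H 1) (tau : V) n : (0 < n)%N ->
  tf_output dec p (nseq n tau) =
  Delta (cls p (ffn (layers p ord0) (emb p tau + \sum_(h < H)
     ((emb p tau *m WV (layers p ord0) h + bV (layers p ord0) h) *m Pmap (layers p ord0) h)))).
Proof.
move=> n0; rewrite /tf_output map_nseq enum_I1 /= /apply_layer size_nseq.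
set c := ffn _ _.
have -> : [seq ffn (layers p ord0) ((nseq n (emb p tau))`_i +
   \sum_(h < H) head_out dec (layers p ord0) h (nseq n (emb p tau)) i *m
   Pmap (layers p ord0) h) | i <- iota 0 n] = nseq n c.
  transitivity [seq c | _ <- iota 0 n]; last by rewrite map_constn size_iota.
  apply/eq_in_map => i.
  rewrite mem_iota add0n => /andP[_ lt_in].
  rewrite nth_nseq lt_in; congr (ffn _ (_ + _)); apply: eq_bigr => h _.
  by rewrite head_out_const.
rewrite size_nseq nth_nseq; case: dec; last by rewrite n0.
by rewrite (ltn_predL n) n0.
Qed.

Theorem proposition4p1 (R : realType) (V : finType) (C : nat)
    (w : nat -> V -> R) (b : R) :
  (2 <= C)%N ->
  (exists (tau : V) (i : nat), (2 <= i <= C)%N /\ w i tau != 0) ->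
  forall (decoder : bool) (d dh H : nat),
    (0 < d)%N -> (0 < dh)%N -> (0 < H)%N ->
  forall p : transformer R V d dh H 1,
  ~ (forall t : seq V, (1 <= size t <= C)%N ->
       tf_output decoder p t
       = b + \sum_(i < size t) w i.+1 (tnth (in_tuple t) i)).
Proof.
move=> _ [tau [i [/andP[i2 iC] wne]]] dec d dh H _ _ _ p Hp.
have E : forall n, (1 <= n <= C)%N ->
   tf_output dec p (nseq n tau) = b + \sum_(k < n) w k.+1 tau.
  move=> n /andP[n1 nC]; rewrite Hp ?size_nseq ?n1 ?nC //.
  have sz := size_nseq n tau.
  congr (_ + _).
  rewrite -[in RHS]sz.
  apply: eq_bigr => k _.
  by rewrite (tnth_nth tau) /= nth_nseq; case: ifP.
have i0 : (0 < i)%N by apply: ltn_trans i2.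
have j1 : (0 < i.-1)%N by rewrite -ltnS prednK.
have jC : (i.-1 <= C)%N by apply: leq_trans (leq_pred i) iC.
move: (E i) (E i.-1); rewrite i0 iC j1 jC => /(_ isT) Ei /(_ isT) Ej.
rewrite !tf_const // in Ei Ej.
have Hs : \sum_(k < i) w k.+1 tau = \sum_(k < i.-1) w k.+1 tau + w i tau.
  by rewrite -(prednK i0) big_ord_recr.
move: Ei; rewrite Ej Hs addrA => /eqP.
rewrite -subr_eq0 opprD addrA subrr sub0r oppr_eq0.
by rewrite (negbTE wne).
Qed.
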